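(* Assume $d\ge3$. The following are equivalent: (i) $a^*_i+a^*_{i+1}=a^*_{i+1}+a^*_{i+2}$ for every integer $i$ with $0\le i\le d-3$; (ii) $a^*_i+a^*_{i+1}=a^*_{i+1}+a^*_{i+2}$ for some integer $i$ with $0\le i\le d-3$; (iii) $r-s=0$ or $r+s=0$.
   Context: Fix an integer $d\ge0$ and $r,s\in(-1,\infty)$. Write $(x)_i=x(x+1)\cdots(x+i-1)$, $(x)_0=1$. For $0\le i\le d$ put $\theta^*_i=i$. Put $b^*_i=\frac{(d-i)(i-d-s)(2d-2i+r+s+2)_i}{(2d-2i+r+s)_{i+1}}$ ($0\le i\le d-1$), $c^*_i=\frac{i(i-d-r-1)(d-i+r+s+1)_{d-i}}{(d-i+r+s+2)_{d-i+1}}$ ($1\le i\le d$), $b^*_d=c^*_0=0$, and $a^*_i=\theta^*_0-b^*_i-c^*_i$ for $0\le i\le d$. *)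

(* Defs.v *)
From mathcomp Require Import all_boot all_order all_algebra.
Set Implicit Arguments. Unset Strict Implicit. Unset Printing Implicit Defensive.
Import Order.TTheory GRing.Theory Num.Theory.
Local Open Scope ring_scope.

Definition poch (R : ringType) (x : R) (n : nat) : R :=
  \prod_(k < n) (x + k%:R).

Definition thetastar (R : ringType) (i : nat) : R := i%:R.

(* b*_i for 0 <= i <= d-1, and b*_d = 0 (also 0 for i > d, unused) *)
Definition bstar (R : fieldType) (d : nat) (r s : R) (i : nat) : R :=
  if (i < d)%N then
    (d - i)%:R * (i%:R - d%:R - s) * poch ((2 * (d - i))%:R + r + s + 2) i
    / poch ((2 * (d - i))%:R + r + s) i.+1
  else 0.

Definition cstar (R : fieldType) (d : nat) (r s : R) (i : nat) : R :=
  if (0 < i)%N then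
    i%:R * (i%:R - d%:R - r - 1) * poch ((d - i)%:R + r + s + 1) (d - i)
    / poch ((d - i)%:R + r + s + 2) (d - i).+1
  else 0.

Definition astar (R : fieldType) (d : nat) (r s : R) (i : nat) : R :=
  thetastar R 0 - bstar d r s i - cstar d r s i.

(* Main.v *)
Require Import Defs.
From mathcomp Require Import all_boot all_order all_algebra.
From mathcomp Require Import ring lra zify.
Import Order.TTheory GRing.Theory Num.Theory.
Local Open Scope ring_scope.

Lemma poch_recl (R : ringType) (x : R) n : poch x n.+1 = x * poch (x+1) n.
Proof.
rewrite /poch big_ord_recl /= addr0; congr (_ * _); apply: eq_bigr => k _.
by rewrite /bump /= natrD addrA.
Qed.

Lemma poch_recr (R : ringType) (x : R) n : poch x n.+1 = poch x n * (x + n%:R).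
Proof. by rewrite /poch big_ord_recr. Qed.

Lemma poch_gt0 (R : realFieldType) (x : R) n : 0 < x -> 0 < poch x n.
Proof.
move=> hx; rewrite /poch; apply: prodr_gt0 => k _.
by apply: ltr_wpDr => //; rewrite ler0n.
Qed.

Lemma bstarE (R : realFieldType) d (r s : R) j : -1 < r -> -1 < s -> (j < d)%N ->
  bstar d r s j = (d-j)%:R * (j%:R - d%:R - s) * ((2*(d-j))%:R + r + s + j%:R + 1)
     / (((2*(d-j))%:R + r+s) * ((2*(d-j))%:R + r+s+1)).
Proof.
move=> hr hs hj; rewrite /bstar hj.
set x := (2*(d-j))%:R + r + s.
have x2 : 2%:R <= (2*(d-j))%:R :> R by rewrite ler_nat; lia.
have hx : 0 < x by rewrite /x; lra.
have e1 : poch x j.+2 = x * (x+1) * poch (x+2) j.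
  by rewrite !poch_recl mulrA; have -> : x + 1 + 1 = x + 2 by ring.
have e2 : poch x j.+2 = poch x j.+1 * (x + j%:R + 1).
  by rewrite poch_recr -natr1 addrA.
have p1 : 0 < poch x j.+1 by apply: poch_gt0.
have e3 : poch (x+2) j = poch x j.+1 * (x + j%:R + 1) / (x * (x+1)).
  rewrite -e2 e1; field; apply/andP; split; lra.
rewrite e3; field; rewrite ?(gt_eqF p1) /=; apply/and3P; split; lra.
Qed.

Lemma cstarE (R : realFieldType) d (r s : R) j : -1 < r -> -1 < s -> (j < d)%N ->
  cstar d r s j = j%:R * (j%:R - d%:R - r - 1) * ((d-j)%:R + r + s + 1)
     / ((((d-j)%:R + r + s + 1) + (d-j)%:R) * (((d-j)%:R + r + s + 1) + (d-j)%:R + 1)).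
Proof.
move=> hr hs hj; rewrite /cstar; case: ifP => hj0; last first.
  by move/negbT: hj0; rewrite -eqn0Ngt => /eqP ->; rewrite !mul0r.
set k := (d - j)%N.
have k1 : 1%:R <= k%:R :> R by rewrite ler_nat; lia.
set y := k%:R + r + s + 1.
have -> : k%:R + r + s + 2 = y + 1 by rewrite /y; ring.
have py : 0 < poch (y+1) k by apply: poch_gt0; rewrite /y; lra.
have e1 : poch y k * (y + k%:R) = y * poch (y+1) k by rewrite -poch_recr poch_recl.
have e2 : poch (y+1) k.+1 = poch (y+1) k * (y + k%:R + 1).
  by rewrite poch_recr; congr (_ * _); ring.
have e3 : poch y k = y * poch (y+1) k / (y + k%:R).
  rewrite -e1; field; rewrite /y; lra.
rewrite e3 e2; field; rewrite ?(gt_eqF py) /=; apply/andP; split; rewrite /y; lra.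
Qed.

Definition Aform {R : realFieldType} (N J r s : R) : R :=
  0 - (N*(J-(N+J)-s)*(2%:R*N + r+s+J+1)/((2%:R*N+r+s)*(2%:R*N+r+s+1)))
    - (J*(J-(N+J)-r-1)*(N+r+s+1)/((N+r+s+1+N)*(N+r+s+1+N+1))).

Lemma astarE (R : realFieldType) d (r s : R) j : -1 < r -> -1 < s -> (j < d)%N ->
  astar d r s j = Aform (d-j)%:R j%:R r s.
Proof.
move=> hr hs hj; rewrite /astar bstarE // cstarE // /Aform /thetastar.
have -> : d%:R = (d-j)%:R + j%:R :> R by rewrite -natrD subnK // ltnW.
by rewrite natrM.
Qed.

Lemma key (R : realFieldType) (N I r s : R) : -1 < r -> -1 < s -> 3%:R <= N -> 0 <= I ->
  Aform N I r s - Aform (N-2%:R) (I+2%:R) r s =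
  (r-s)*(r+s) * (-(2%:R * (2%:R*N+r+s-1) * (2%:R*N+r+s+2%:R+2%:R*I))
      / ((2%:R*N+r+s)*(2%:R*N+r+s+2%:R)*(2%:R*N+r+s-4%:R)*(2%:R*N+r+s-2%:R))).
Proof.
move=> hr hs hN hI; rewrite /Aform; field.
by repeat (apply/andP; split); apply: lt0r_neq0; lra.
Qed.

Lemma step (R : realFieldType) d (r s : R) i : -1 < r -> -1 < s -> (i <= d - 3)%N -> (3 <= d)%N ->
  (astar d r s i + astar d r s i.+1 = astar d r s i.+1 + astar d r s i.+2) <->
  (r - s = 0 \/ r + s = 0).
Proof.
move=> hr hs hi hd.
set N := (d - i)%:R : R; set I := i%:R : R.
have hN : 3%:R <= N by rewrite /N ler_nat; lia.
have hI : 0 <= I by rewrite /I ler0n.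
have E : astar d r s i - astar d r s i.+2 = (r-s)*(r+s) * (-(2%:R * (2%:R*N+r+s-1) * (2%:R*N+r+s+2%:R+2%:R*I))
      / ((2%:R*N+r+s)*(2%:R*N+r+s+2%:R)*(2%:R*N+r+s-4%:R)*(2%:R*N+r+s-2%:R))).
  rewrite !astarE //; try lia.
  have -> : (d - i.+2)%:R = N - 2%:R :> R by rewrite /N -natrB; [congr (_%:R); lia | lia].
  have -> : (i.+2)%:R = I + 2%:R :> R by rewrite /I -natrD addn2.
  exact: key.
set K := (-(_ * _ * _) / _) in E.
have K0 : K != 0.
  rewrite /K mulNr oppr_eq0; apply: lt0r_neq0; apply: divr_gt0.
    by apply: mulr_gt0; [apply: mulr_gt0|]; lra.
  by repeat apply: mulr_gt0; lra.
split.
  move=> h.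
  have : (r - s) * (r + s) * K == 0.
    by rewrite -E; apply/eqP; move: h; lra.
  rewrite mulf_eq0 (negbTE K0) orbF mulf_eq0 => /orP [] /eqP; [left|right] => //.
move=> h.
have h0 : astar d r s i - astar d r s i.+2 = 0 by rewrite E; case: h => ->; ring.
apply/eqP; rewrite -subr_eq0; apply/eqP; rewrite -h0; ring.
Qed.

Theorem lemma2p9 (R : realFieldType) (d : nat) (r s : R) :
  (3 <= d)%N -> -1 < r -> -1 < s ->
  let P1 := forall i : nat, (i <= d - 3)%N ->
      astar d r s i + astar d r s i.+1 = astar d r s i.+1 + astar d r s i.+2 in
  let P2 := exists i : nat, (i <= d - 3)%N /\
      astar d r s i + astar d r s i.+1 = astar d r s i.+1 + astar d r s i.+2 in
  let P3 := r - s = 0 \/ r + s = 0 in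
  (P1 <-> P2) /\ (P2 <-> P3).
Proof.
move=> hd hr hs P1 P2 P3; split; split.
- by move=> h; exists 0%N; split => //; apply: h.
- case=> i [hi h] j hj; apply: (@step R d r s j hr hs hj hd).2; exact: (@step R d r s i hr hs hi hd).1.
- by case=> i [hi h]; apply: (@step R d r s i hr hs hi hd).1.
- by move=> h; exists 0%N; split => //; apply: (@step R d r s 0 hr hs _ hd).2.
Qed.
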